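(* Let $n\ge 1$, let $v\in\mathbb{S}^{n-1}=\{v\in\mathbb{R}^n:\|v\|=1\}$, and for class parameters $\alpha_k>0$, $v_k\in\mathbb{S}^{n-1}$, $b_k\in\mathbb{R}$ define the logit $u_k(x)=-\alpha_k B^{v_k}(x)+b_k$. (Poincaré) Fix $x\in\mathbb{R}^n$; for all $K<0$ with $|K|$ small enough, $x$ lies in the Poincaré ball $\mathbb{P}^n_K$. Then, as $K\to 0^-$, $$B^{v}(x)\to -2\langle v,x\rangle,\qquad u_k(x)\to 2\alpha_k\langle v_k,x\rangle+b_k .$$ (Lorentz) Fix $x_s\in\mathbb{R}^n$ and, for each $K<0$, let $x=[x_t,x_s^\top]^\top\in\mathbb{L}^n_K$ with $x_t=\sqrt{-1/K+\|x_s\|^2}$. Then, as $K\to 0^-$, $$B^{v}(x)\to -\langle v,x_s\rangle,\qquad u_k(x)\to \alpha_k\langle v_k,x_s\rangle+b_k .$$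
   Context: For $K<0$, the Poincaré ball is $\mathbb{P}^n_K=\{x\in\mathbb{R}^n:\|x\|^2<-1/K\}$, and its Busemann function in direction $v\in\mathbb{S}^{n-1}$ (for the geodesic ray from the origin with initial unit velocity $v$) is $B^v(x)=\frac{1}{\sqrt{-K}}\log\!\left(\frac{\|v-\sqrt{-K}\,x\|^2}{1+K\|x\|^2}\right)$. The Lorentz model is $\mathbb{L}^n_K=\{x=[x_t,x_s^\top]^\top\in\mathbb{R}^{n+1}: -x_t^2+\|x_s\|^2=1/K,\ x_t>0\}$, with Busemann function $B^v(x)=\frac{1}{\sqrt{-K}}\log\!\left(\sqrt{-K}\,(x_t-\langle x_s,v\rangle)\right)$. Here $\langle\cdot,\cdot\rangle$ and $\|\cdot\|$ are the Euclidean inner product and norm. *)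

(* Defs.v *)
From HB Require Import structures.
From mathcomp Require Import all_boot all_order all_algebra.
From mathcomp Require Import all_classical all_reals all_analysis.
Set Implicit Arguments. Unset Strict Implicit. Unset Printing Implicit Defensive.
Import Order.TTheory GRing.Theory Num.Theory.
Local Open Scope ring_scope.

Definition dotv {R : realType} {n : nat} (u w : 'rV[R]_n) : R :=
  \sum_(i < n) u 0 i * w 0 i.
Definition enorm {R : realType} {n : nat} (u : 'rV[R]_n) : R :=
  Num.sqrt (dotv u u).

Definition in_poincare_ball {R : realType} {n : nat} (K : R) (x : 'rV[R]_n) : Prop :=
  enorm x ^+ 2 < - K^-1.

Definition busemann_P {R : realType} {n : nat} (K : R) (v x : 'rV[R]_n) : R :=
  (Num.sqrt (- K))^-1 *
  ln (enorm (v - Num.sqrt (- K) *: x) ^+ 2 / (1 + K * enorm x ^+ 2)).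

Definition in_lorentz {R : realType} {n : nat} (K : R) (xt : R) (xs : 'rV[R]_n) : Prop :=
  - xt ^+ 2 + enorm xs ^+ 2 = K^-1 /\ 0 < xt.

Definition busemann_L {R : realType} {n : nat} (K : R) (v : 'rV[R]_n) (xt : R) (xs : 'rV[R]_n) : R :=
  (Num.sqrt (- K))^-1 * ln (Num.sqrt (- K) * (xt - dotv xs v)).

Definition lorentz_xt {R : realType} {n : nat} (K : R) (xs : 'rV[R]_n) : R :=
  Num.sqrt (- K^-1 + enorm xs ^+ 2).

(* Main.v *)
Require Import Defs.
From HB Require Import structures.
From mathcomp Require Import all_boot all_order all_algebra.
From mathcomp Require Import all_classical all_reals all_analysis.
From mathcomp Require Import ring lra.
Import Order.TTheory GRing.Theory Num.Theory.
Local Open Scope ring_scope.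
Local Open Scope classical_set_scope.

Module Aux.
Import numFieldNormedType.Exports.

Lemma ln_le_sub1 (R : realType) (y : R) : 0 < y -> ln y <= y - 1.
Proof.
move=> y0; have := @le_ln1Dx R (y - 1).
have -> : 1 + (y - 1) = y by rewrite addrC subrK.
apply; lra.
Qed.

Lemma ln_ge_sub1 (R : realType) (y : R) : 0 < y -> 1 - y^-1 <= ln y.
Proof.
move=> y0; have yi : 0 < y^-1 by rewrite invr_gt0.
have := @ln_le_sub1 R _ yi; rewrite lnV ?posrE // => H; lra.
Qed.

Lemma key (R : realType) (F : set_system R) {FF : ProperFilter F} (s g h : R -> R) (d : R) :
  (\forall K \near F, 0 < s K /\ g K = 1 + s K * h K) ->
  h x @[x --> F] --> d -> s x @[x --> F] --> (0:R) ->
  (s K)^-1 * ln (g K) @[K --> F] --> d.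
Proof.
move=> Hn hd s0.
have g1 : g x @[x --> F] --> (1:R).
  have e : {near F, (fun K => 1 + s K * h K) =1 g}.
    by near=> K; have [_ ->] : 0 < s K /\ g K = 1 + s K * h K by near: K.
  apply: (cvg_trans (near_eq_cvg e)).
  have := cvgD (cvg_cst (1:R)) (cvgM s0 hd); rewrite mul0r addr0; exact.
have gpos : \forall K \near F, 0 < g K by apply: (cvgr_gt 1 g1); rewrite ltr01.
apply: (@squeeze_cvgr _ _ _ _ (fun K => h K / g K) h).
  near=> K; have [sp gE] : 0 < s K /\ g K = 1 + s K * h K by near: K.
  have gp : 0 < g K by near: K.
  have sn : s K != 0 by rewrite gt_eqF.
  have gn : g K != 0 by rewrite gt_eqF.
  apply/andP; split.
    have -> : h K / g K = (s K)^-1 * (1 - (g K)^-1).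
      rewrite gE; field; rewrite -gE; exact/andP.
    apply: ler_wpM2l; [by rewrite invr_ge0 ltW | exact: ln_ge_sub1].
  have -> : h K = (s K)^-1 * (g K - 1) by rewrite gE; field.
  apply: ler_wpM2l; [by rewrite invr_ge0 ltW | exact: ln_le_sub1].
- have -> : d = d / 1 by rewrite divr1.
  apply: cvgM => //; apply: cvgV => //; exact: oner_neq0.
- exact: hd.
Unshelve. all: by end_near.
Qed.

Lemma sqrtN0 (R : realType) : Num.sqrt (- K) @[K --> (0:R)] --> (0:R).
Proof.
rewrite -[X in _ --> X]sqrtr0 -[X in Num.sqrt X]oppr0.
apply: (continuous_comp (f := fun K : R => - K) (g := @Num.sqrt R)).
  first [exact: opp_continuous | (apply: cvgN; exact: cvg_id) | (match goal with |- ?G => idtac G end; fail)].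
exact: sqrt_continuous.
Qed.

Lemma dotv_ge0 (R : realType) n (u : 'rV[R]_n) : 0 <= dotv u u.
Proof. by rewrite /dotv; apply: sumr_ge0 => i _; exact: sqr_ge0. Qed.

Lemma enorm_sq (R : realType) n (u : 'rV[R]_n) : enorm u ^+ 2 = dotv u u.
Proof. by rewrite /enorm sqr_sqrtr // dotv_ge0. Qed.

Lemma dotvC (R : realType) n (u w : 'rV[R]_n) : dotv u w = dotv w u.
Proof. by rewrite /dotv; apply: eq_bigr => i _; rewrite mulrC. Qed.

Lemma unit_dot (R : realType) n (u : 'rV[R]_n) : enorm u = 1 -> dotv u u = 1.
Proof. by move=> h; rewrite -enorm_sq h expr1n. Qed.

Lemma dotv_sub (R : realType) n (u x : 'rV[R]_n) (t : R) :
  dotv (u - t *: x) (u - t *: x) = dotv u u - 2 * t * dotv u x + t ^+ 2 * dotv x x.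
Proof.
rewrite /dotv.
have -> : \sum_(i < n) (u - t *: x) 0 i * (u - t *: x) 0 i =
  \sum_(i < n) (u 0 i * u 0 i + ((- (2 * t)) * (u 0 i * x 0 i) + t ^+ 2 * (x 0 i * x 0 i))).
  by apply: eq_bigr => i _; rewrite !mxE; ring.
by rewrite !big_split /= -!mulr_sumr; ring.
Qed.

Lemma lin0 (R : realType) (a b : R) : (a + K * b) @[K --> (0:R)] --> a.
Proof.
have id0 : K @[K --> (0:R)] --> (0:R) by exact: cvg_id.
have := cvgD (cvg_cst a) (cvgMr_tmp (b:=b) id0).
rewrite mul0r addr0 => H; exact: H.
Qed.

Lemma near_P (R : realType) (a : R) :
  \forall K \near (0:R)^'-, K < 0 /\ 0 < 1 + K * a.
Proof.
have h1 : \forall K \near (0:R)^'-, 0 < 1 + K * a.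
  apply: (cvgr_gt 1 (cvg_at_left_filter (@lin0 R 1 a))); exact: ltr01.
near=> K; split; last by near: K.
by near: K; exact: nbhs_left_lt.
Unshelve. all: by end_near.
Qed.

Lemma poinc_lim (R : realType) n (w x : 'rV[R]_n) : enorm w = 1 ->
  busemann_P K w x @[K --> (0:R)^'-] --> - 2 * dotv w x.
Proof.
move=> hw.
set a := enorm x ^+ 2; set c := dotv w x.
apply: (@key R _ _ (fun K => Num.sqrt (-K))
  (fun K => enorm (w - Num.sqrt (-K) *: x) ^+ 2 / (1 + K * a))
  (fun K => (-2 * c + 2 * Num.sqrt (-K) * a) / (1 + K * a))).
- near=> K; have [K0 p] : K < 0 /\ 0 < 1 + K * a by near: K; exact: near_P.
  split; first by rewrite sqrtr_gt0 oppr_gt0.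
  have tsq : Num.sqrt (- K) ^+ 2 = - K by rewrite sqr_sqrtr // oppr_ge0 ltW.
  rewrite enorm_sq dotv_sub unit_dot // -/c -enorm_sq -/a.
  move: tsq p; set t := Num.sqrt (- K); clearbody t => tsq p.
  have KE : K = - t ^+ 2 by rewrite tsq opprK.
  rewrite KE in p *; field; exact: lt0r_neq0.
- apply: cvg_at_left_filter.
  have := cvgM (cvgD (cvg_cst (-2 * c)) (cvgMr_tmp (b:=a) (cvgMl_tmp (a:=2) (@sqrtN0 R))))
     (cvgV (oner_neq0 R) (@lin0 R 1 a)).
  rewrite mulr0 mul0r addr0 invr1 mulr1; apply.
- exact: cvg_at_left_filter (@sqrtN0 R).
Unshelve. all: by end_near.
Qed.

Lemma lor_lim (R : realType) n (w xs : 'rV[R]_n) :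
  busemann_L K w (lorentz_xt K xs) xs @[K --> (0:R)^'-] --> - dotv w xs.
Proof.
rewrite dotvC.
set a := enorm xs ^+ 2; set c := dotv xs w.
have a0 : 0 <= a by rewrite /a sqr_ge0.
apply: (@key R _ _ (fun K => Num.sqrt (-K))
  (fun K => Num.sqrt (-K) * (lorentz_xt K xs - c))
  (fun K => Num.sqrt (-K) * a / (Num.sqrt (1 + K * - a) + 1) - c)).
- near=> K; have K0 : K < 0 by near: K; exact: nbhs_left_lt.
  split; first by rewrite sqrtr_gt0 oppr_gt0.
  have tsq : Num.sqrt (- K) ^+ 2 = - K by rewrite sqr_sqrtr // oppr_ge0 ltW.
  have r2 : Num.sqrt (1 + K * - a) ^+ 2 = 1 + K * - a by rewrite sqr_sqrtr //; nra.
  have r0 : 0 <= Num.sqrt (1 + K * - a) by exact: sqrtr_ge0.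
  have tx : Num.sqrt (- K) * lorentz_xt K xs = Num.sqrt (1 + K * - a).
    rewrite /lorentz_xt -sqrtrM ?oppr_ge0 ?ltW //; congr Num.sqrt.
    rewrite -/a; field; exact: lt0r_neq0 (K0 : K < 0) || (by rewrite lt_eqF).
  rewrite mulrBr tx.
  move: tsq r2 r0; set t := Num.sqrt (- K); set r := Num.sqrt (1 + K * - a).
  clearbody t r => tsq r2 r0.
  have r1 : r + 1 != 0 by rewrite gt_eqF //; lra.
  have -> : t * (t * a / (r + 1) - c) = (t * t * a) / (r + 1) - t * c by field.
  have -> : t * t * a = (r - 1) * (r + 1) by nra.
  rewrite mulfK //; ring.
- apply: cvg_at_left_filter.
  have sq : Num.sqrt (1 + K * - a) @[K --> (0:R)] --> (1:R).
    have := continuous_cvg _ (@sqrt_continuous R 1) (@lin0 R 1 (- a)).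
    rewrite sqrtr1; apply.
  have two0 : (1 + 1 : R) != 0 by rewrite gt_eqF //; lra.
  have := cvgD (cvgM (cvgMr_tmp (b:=a) (@sqrtN0 R)) (cvgV two0 (cvgD sq (cvg_cst (1:R))))) (cvg_cst (- c)).
  rewrite !mul0r add0r; apply.
- exact: cvg_at_left_filter (@sqrtN0 R).
Unshelve. all: by end_near.
Qed.

Lemma comb (R : realType) (f : R -> R) (l al bk : R) :
  f K @[K --> (0:R)^'-] --> l ->
  (- al * f K + bk) @[K --> (0:R)^'-] --> - al * l + bk.
Proof.
move=> H; have := cvgD (cvgMl_tmp (a:=-al) H) (cvg_cst bk); apply.
Qed.
End Aux.

Theorem theorem1 (R : realType) (n : nat) (hn : (1 <= n)%N) (v : 'rV[R]_n)
  (hv : enorm v = 1) :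
  (* Poincare model *)
  (forall x : 'rV[R]_n,
     (\forall K \near (0:R)^'-, in_poincare_ball K x) /\
     (busemann_P K v x @[K --> (0:R)^'-] --> - 2 * dotv v x) /\
     (forall (alpha : R) (vk : 'rV[R]_n) (bk : R), 0 < alpha -> enorm vk = 1 ->
        (- alpha * busemann_P K vk x + bk) @[K --> (0:R)^'-]
          --> 2 * alpha * dotv vk x + bk)) /\
  (* Lorentz model *)
  (forall xs : 'rV[R]_n,
     (forall K : R, K < 0 -> in_lorentz K (lorentz_xt K xs) xs) /\
     (busemann_L K v (lorentz_xt K xs) xs @[K --> (0:R)^'-] --> - dotv v xs) /\
     (forall (alpha : R) (vk : 'rV[R]_n) (bk : R), 0 < alpha -> enorm vk = 1 ->
        (- alpha * busemann_L K vk (lorentz_xt K xs) xs + bk) @[K --> (0:R)^'-]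
          --> alpha * dotv vk xs + bk)).
Proof.
split.
- move=> x; split; [|split].
  + near=> K.
    have [K0 p] : K < 0 /\ 0 < 1 + K * enorm x ^+ 2 by near: K; exact: Aux.near_P.
    rewrite /in_poincare_ball.
    have Km : K * (- K^-1) = -1 by field; rewrite lt_eqF.
    move: Km p K0; set m := - K^-1; set a := enorm x ^+ 2 => Km p K0; nra.
  + exact: Aux.poinc_lim.
  + move=> al vk bk _ hvk.
    have := @Aux.comb R _ _ al bk (@Aux.poinc_lim R n vk x hvk).
    have -> : 2 * al * dotv vk x + bk = - al * (- 2 * dotv vk x) + bk by ring.
    apply.
- move=> xs; split; [|split].
  + move=> K K0; rewrite /in_lorentz /lorentz_xt.
    have Ki : K^-1 < 0 by rewrite invr_lt0.
    have a0 : 0 <= enorm xs ^+ 2 by exact: sqr_ge0.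
    rewrite sqr_sqrtr; last lra.
    split; first ring.
    rewrite sqrtr_gt0; lra.
  + exact: Aux.lor_lim.
  + move=> al vk bk _ hvk.
    have := @Aux.comb R _ _ al bk (@Aux.lor_lim R n vk xs).
    have -> : al * dotv vk xs + bk = - al * (- dotv vk xs) + bk by ring.
    apply.
Unshelve. all: by end_near.
Qed.
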